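(* Let $P,W$ be finite point sets in the plane such that no two distinct points of $P\cup W$ have equal $x$-coordinate or equal $y$-coordinate, and let $p,q\in P$ be distinct. If there is $w\in W$ with $x(w)$ strictly between $x(p)$ and $x(q)$, or with $y(w)$ strictly between $y(p)$ and $y(q)$, then $pq$ is an edge of $\mathrm{SG}^+(P,W)$.
   Context: For finite point sets $P$ (vertices) and $W$ (witnesses) in $\mathbb{R}^2$ (which may share points), the square graph $\mathrm{SG}^+(P,W)$ is the graph with vertex set $P$ in which distinct $x,y\in P$ are adjacent if and only if there is an axis-aligned square with $x$ and $y$ on its boundary whose interior contains at least one point of $W$. $x(\cdot)$ and $y(\cdot)$ denote coordinates. *)

(* Defs.v *)
From Stdlib Require Import Reals List.
Open Scope R_scope.

Definition point := (R * R)%type.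
Definition xc (p : point) : R := fst p.
Definition yc (p : point) : R := snd p.

Definition in_closed_square (a b s : R) (p : point) : Prop :=
  a <= xc p <= a + s /\ b <= yc p <= b + s.

Definition on_square_boundary (a b s : R) (p : point) : Prop :=
  in_closed_square a b s p /\
  (xc p = a \/ xc p = a + s \/ yc p = b \/ yc p = b + s).

Definition in_square_interior (a b s : R) (p : point) : Prop :=
  a < xc p < a + s /\ b < yc p < b + s.

Definition SGplus_edge (P W : list point) (u v : point) : Prop :=
  In u P /\ In v P /\ u <> v /\
  exists a b s, 0 < s /\
    on_square_boundary a b s u /\ on_square_boundary a b s v /\
    exists w, In w W /\ in_square_interior a b s w.

Definition general_position (P W : list point) : Prop :=
  forall u v, In u (P ++ W) -> In v (P ++ W) -> u <> v ->
    xc u <> xc v /\ yc u <> yc v.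

Definition strictly_between (t a b : R) : Prop :=
  (a < t < b) \/ (b < t < a).

(* Main.v *)
Require Import Defs.
From Stdlib Require Import Reals List Lra.
Import ListNotations.
Open Scope R_scope.

Ltac solve_sq :=
  unfold on_square_boundary, in_closed_square, in_square_interior in *; cbv beta in *; simpl in *;
  repeat split;
  first [ lra
        | left; lra
        | right; left; lra
        | right; right; left; lra
        | right; right; right; lra ].

Lemma big (l : list R) : exists s, 0 < s /\ Forall (fun t => t < s) l.
Proof.
  induction l as [|t l IH].
  - exists 1. split; [lra| constructor].
  - destruct IH as [s [Hs Hl]]. exists (s + Rabs t).
    pose proof (Rabs_pos t). pose proof (Rle_abs t).
    split; [lra|]. constructor; [lra|].
    eapply Forall_impl; [|exact Hl]. intros a Ha; simpl in Ha; lra.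
Qed.

Lemma coreX (p q w : point) : xc p < xc w < xc q -> yc p <> yc q ->
  exists a b s, 0 < s /\ on_square_boundary a b s p /\
   on_square_boundary a b s q /\ in_square_interior a b s w.
Proof.
  destruct p as [x1 y1], q as [x2 y2], w as [xw yw]; unfold xc, yc in *; simpl.
  intros Hx Hy.
  destruct (big [x2 - x1; y1 - y2; y2 - y1; yw - y2; y2 - yw; yw - y1; y1 - yw])
    as [s [Hs Hl]].
  repeat match goal with H : Forall _ (_ :: _) |- _ => inversion_clear H end.
  destruct (Rlt_dec y2 y1).
  - destruct (Rlt_dec y2 yw).
    + exists x1, y2, s. solve_sq.
    + exists (x2 - s), (y1 - s), s. solve_sq.
  - destruct (Rlt_dec y1 yw).
    + exists (x2 - s), y1, s. solve_sq.
    + exists x1, (y2 - s), s. solve_sq.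
Qed.

Lemma coreY (p q w : point) : yc p < yc w < yc q -> xc p <> xc q ->
  exists a b s, 0 < s /\ on_square_boundary a b s p /\
   on_square_boundary a b s q /\ in_square_interior a b s w.
Proof.
  destruct p as [x1 y1], q as [x2 y2], w as [xw yw]; unfold xc, yc in *; simpl.
  intros Hx Hy.
  destruct (big [y2 - y1; x1 - x2; x2 - x1; xw - x2; x2 - xw; xw - x1; x1 - xw])
    as [s [Hs Hl]].
  repeat match goal with H : Forall _ (_ :: _) |- _ => inversion_clear H end.
  destruct (Rlt_dec x2 x1).
  - destruct (Rlt_dec x2 xw).
    + exists x2, y1, s. solve_sq.
    + exists (x1 - s), (y2 - s), s. solve_sq.
  - destruct (Rlt_dec x1 xw).
    + exists x1, (y2 - s), s. solve_sq.
    + exists (x2 - s), y1, s. solve_sq.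
Qed.

Theorem mainTheorem8 (P W : list point) (p q : point) :
  general_position P W ->
  In p P -> In q P -> p <> q ->
  (exists w, In w W /\
     (strictly_between (xc w) (xc p) (xc q) \/
      strictly_between (yc w) (yc p) (yc q))) ->
  SGplus_edge P W p q.
Proof.
  intros HG Hp Hq Hpq [w [Hw Hb]].
  assert (HP : In p (P ++ W)) by (apply in_or_app; auto).
  assert (HQ : In q (P ++ W)) by (apply in_or_app; auto).
  destruct (HG p q HP HQ Hpq) as [Hx Hy].
  unfold SGplus_edge. do 3 (split; [assumption|]).
  assert (E : exists a b s, 0 < s /\ on_square_boundary a b s p /\
   on_square_boundary a b s q /\ in_square_interior a b s w).
  { destruct Hb as [[H|H]|[H|H]].
    - apply coreX; auto.
    - destruct (coreX q p w) as [a [b [s [H1 [H2 [H3 H4]]]]]]; auto.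
      exists a, b, s; auto.
    - apply coreY; auto.
    - destruct (coreY q p w) as [a [b [s [H1 [H2 [H3 H4]]]]]]; auto.
      exists a, b, s; auto. }
  destruct E as [a [b [s [H1 [H2 [H3 H4]]]]]].
  exists a, b, s. split; [exact H1|]. split; [exact H2|]. split; [exact H3|]. exists w; auto.
Qed.
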